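(* Let $s\ge3$ and $k\ge1$, and let $\Gamma$ be a connected subgraph of $P_{s,k}$ with $n=|\mathcal{E}\Gamma|$ edges. Suppose there exist an edge transitive automorphism $\psi\in\mathrm{Aut}(P_{s,k})$ and an edge $e\in\mathcal{E}\Gamma$ such that $\{e,\psi(e),\dots,\psi^{n-1}(e)\}=\mathcal{E}\Gamma$ (as unoriented edges). Let $\mathfrak{s}_0,\dots,\mathfrak{s}_{s-1}$ be the sides of $P_{s,k}$, and write $n=sm+t$ with $m\in\{1,\dots,k\}$ and $t\in\{0,\dots,s-1\}$. Then (i) exactly $t$ sides satisfy $|\mathfrak{s}_i\cap\mathcal{E}\Gamma|=m+1$, and (ii) the remaining $s-t$ sides satisfy $|\mathfrak{s}_i\cap\mathcal{E}\Gamma|=m$.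
   Context: A graph is a finite 1-dimensional CW complex (multiple edges and loops allowed). A graph automorphism is a bijection of vertices together with a bijection of oriented edges (possibly reversing orientation) compatible with endpoints and edge reversal; it is edge transitive if the group it generates acts transitively on the unoriented edges. The $s$-gonal graph of depth $k$, $P_{s,k}$, has vertices $v_0,\dots,v_{s-1}$ and edges $e_i^j$ ($0\le i\le s-1$, $1\le j\le k$) with $e_i^j$ joining $v_i$ to $v_{i+1}$ (indices mod $s$). The sides of $P_{s,k}$ are the sets $\mathfrak{s}_i=\{e_i^j:1\le j\le k\}$. *)

(* Defs.v *)
From mathcomp Require Import all_boot all_fingroup.
Set Implicit Arguments. Unset Strict Implicit. Unset Printing Implicit Defensive.

(* Vertices: 'I_s (v_i).  Unoriented edges: 'I_s * 'I_k, the pair (i, j)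
   standing for e_i^{j+1}, joining v_i to v_{i+1 mod s}.
   Oriented edges: (edge, b); b = false is the orientation v_i -> v_{i+1},
   b = true the reverse one. *)
Definition pedge (s k : nat) : finType := ('I_s * 'I_k)%type.
Definition poedge (s k : nat) : finType := ('I_s * 'I_k * bool)%type.

Definition orig (s k : nat) (x : poedge s k) : 'I_s :=
  if x.2 then ordS x.1.1 else x.1.1.
Definition orev (s k : nat) (x : poedge s k) : poedge s k := (x.1, ~~ x.2).
Definition term (s k : nat) (x : poedge s k) : 'I_s := orig (orev x).

Definition is_aut (s k : nat) (fV : {perm 'I_s}) (fE : {perm poedge s k}) : Prop :=
  (forall x, fE (orev x) = orev (fE x)) /\
  (forall x, orig (fE x) = fV (orig x)) /\
  (forall x, term (fE x) = fV (term x)).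

Definition uact (s k : nat) (g : {perm poedge s k}) (e : pedge s k) : pedge s k :=
  (g (e, false)).1.

Definition edge_transitive (s k : nat) (fE : {perm poedge s k}) : Prop :=
  forall e1 e2 : pedge s k, exists2 g, g \in <[fE]>%g & uact g e1 = e2.

Definition endpoints_in (s k : nat) (V : {set 'I_s}) (E : {set pedge s k}) : Prop :=
  forall e, e \in E -> (e.1 \in V) && (ordS e.1 \in V).

Definition adj (s k : nat) (E : {set pedge s k}) : rel 'I_s :=
  fun x y => [exists e in E, ((e.1 == x) && (ordS e.1 == y))
                          || ((e.1 == y) && (ordS e.1 == x))].

Definition connected_sub (s k : nat) (V : {set 'I_s}) (E : {set pedge s k}) : Prop :=
  V != set0 /\ forall x y, x \in V -> y \in V -> connect (adj E) x y.

Definition side (s k : nat) (i : 'I_s) : {set pedge s k} := [set e | e.1 == i].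

(* Main.v *)
Require Import Defs.
From mathcomp Require Import all_boot all_fingroup.
From mathcomp Require Import zify.

Lemma ordSS n (a : 'I_n) : 3 <= n -> ordS (ordS a) != a.
Proof.
move=> h; apply/eqP => /(congr1 val) /=.
have ha := ltn_ord a.
case: (ltnP a.+1 n) => h1.
  rewrite (modn_small h1).
  case: (ltnP a.+2 n) => h2; first by rewrite (modn_small h2); lia.
  have -> : a.+2 = n by lia.
  rewrite modnn; lia.
have -> : a.+1 = n by lia.
rewrite modnn modn_small; lia.
Qed.

Lemma traject_map (T : Type) (f : T -> T) x n :
  traject f x n = map (fun p => iter p f x) (iota 0 n).
Proof.
apply: (@eq_from_nth _ x); first by rewrite size_traject size_map size_iota.
move=> i; rewrite size_traject => hi.
by rewrite nth_traject // (nth_map 0) ?size_iota // nth_iota.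
Qed.

Lemma card_side (s k n : nat) (F : 'I_n -> pedge s k) (E : {set pedge s k})
  (hE : E = [set F p | p : 'I_n]) (hn : #|E| = n) (g : nat -> 'I_s)
  (hg : forall p : 'I_n, (F p).1 = g p) (i : 'I_s) :
  #|side k i :&: E| = count_mem i (map g (iota 0 n)).
Proof.
have hinj : {in 'I_n &, injective F}.
  by apply/imset_injP; rewrite -hE hn card_ord.
have -> : side k i :&: E = [set F p | p in [pred p : 'I_n | g p == i]].
  apply/setP => z; rewrite hE !inE.
  apply/idP/imsetP.
    case/andP => hz /imsetP [p _ hp]; exists p => //.
    by rewrite inE -hg -hp.
  case=> p hp ->; rewrite inE in hp.
  by rewrite hg hp /=; apply: imset_f.
rewrite card_in_imset; last by move=> a b _ _; apply: hinj.
rewrite -val_enum_ord count_map count_map cardE /enum_mem size_filter.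
rewrite count_filter; apply: eq_count => p; by rewrite /= !inE ?andbT.
Qed.

Section Aut.
Variables (s k : nat) (hs : 3 <= s) (hk : 1 <= k).
Variables (fV : {perm 'I_s}) (fE : {perm poedge s k}).
Hypothesis haut : is_aut fV fE.

Definition tau (i : 'I_s) : 'I_s :=
  if ordS (fV i) == fV (ordS i) then fV i else fV (ordS i).

Lemma step x : (fE x).1.1 = tau x.1.1.
Proof.
case: x => [[i j] b].
suff Hf : (fE ((i, j), false)).1.1 = tau i.
  case: b => //. have := haut.1 ((i, j), false). rewrite /orev /= => ->.
  exact Hf.
case: haut => _ [Ho Ht]. move: (Ho ((i, j), false)) (Ht ((i, j), false)).
rewrite /term /orig /orev /tau /=. case: (fE _) => [[y1 y2] b'] /=.
case: b' => /= <- <-.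
  by rewrite (negbTE (@ordSS _ y1 hs)).
by rewrite eqxx.
Qed.

Lemma iterE p y : ((fE ^+ p)%g y).1.1 = iter p tau y.1.1.
Proof.
elim: p => [|p IH] /=; first by rewrite expg0 perm1.
by rewrite expgSr permM step IH.
Qed.

Lemma tau_inj : injective tau.
Proof.
pose N := #[fE]%g.
have HN x : iter N tau x = x.
  have := iterE N ((x, Ordinal hk), false).
  by rewrite expg_order perm1 /= => H; rewrite -H.
have hN : 0 < N by exact: order_gt0.
apply: (can_inj (g := iter N.-1 tau)) => x.
by rewrite -iterSr prednK // HN.
Qed.
End Aut.

Theorem lemma7p3 (s k : nat) (hs : 3 <= s) (hk : 1 <= k)
  (V : {set 'I_s}) (E : {set pedge s k})
  (hsub : endpoints_in V E) (hconn : connected_sub V E)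
  (fV : {perm 'I_s}) (fE : {perm poedge s k})
  (haut : is_aut fV fE) (htr : edge_transitive fE)
  (e : pedge s k) (he : e \in E)
  (horb : E = [set uact (fE ^+ i)%g e | i : 'I_#|E|])
  (m t : nat) (hm1 : 1 <= m) (hmk : m <= k) (ht : t < s)
  (hn : #|E| = s * m + t) :
  #|[set i : 'I_s | #|side k i :&: E| == m.+1]| = t /\
  #|[set i : 'I_s | #|side k i :&: E| == m]| = s - t.
Proof.
set ta := @tau s fV.
set x0 := e.1.
have hall i : fconnect ta x0 i.
  have [g hg hu] := htr e (i, Ordinal hk).
  case/cycleP: hg => p hp; subst g.
  move: hu => /(congr1 (fun z => z.1)) /=.
  rewrite /uact (@iterE _ _ hs _ _ haut) /= => <-.
  exact: fconnect_iter.
have hord : fingraph.order ta x0 = s.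
  rewrite /fingraph.order -[RHS]card_ord; apply: eq_card => i.
  by rewrite !inE hall.
have horbs : fingraph.orbit ta x0 = traject ta x0 s by rewrite /fingraph.orbit hord.
have huniq : uniq (traject ta x0 s) by rewrite -horbs orbit_uniq.
have hmem i : i \in traject ta x0 s by rewrite -horbs -fconnect_orbit.
have hinj : injective ta := @tau_inj _ _ hs hk _ _ haut.
have hper : iter s ta x0 = x0 by have := iter_order hinj x0; rewrite hord.
have hperq q : iter (s * q) ta x0 = x0.
  elim: q => [|q IH]; first by rewrite muln0.
  by rewrite mulnS iterD IH hper.
have hc q i : count_mem i (traject ta x0 (s * q)) = q.
  elim: q => [|q IH]; first by rewrite muln0.
  rewrite mulnS trajectD count_cat hper IH count_uniq_mem // hmem.
  by rewrite add1n.
set L := take t (traject ta x0 s).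
have hL : uniq L by rewrite take_uniq.
have hsL : size L = t by rewrite size_takel // size_traject ltnW.
have hcount i : count_mem i (traject ta x0 (s * m + t)) = m + (i \in L).
  rewrite trajectD count_cat hc hperq count_uniq_mem; last first.
    by rewrite -(take_traject _ _ (ltnW ht)).
  by rewrite /L take_traject // ltnW.
have hcard i : #|side k i :&: E| = m + (i \in L).
  rewrite (@card_side s k #|E| (fun p => uact (fE ^+ p)%g e) E horb erefl
     (fun p => iter p ta x0)); last first.
    by move=> p; rewrite /uact (@iterE _ _ hs _ _ haut).
  by rewrite -traject_map hn hcount.
have hA : [set i : 'I_s | #|side k i :&: E| == m.+1] = [set i | i \in L].
  apply/setP => i; rewrite !inE hcard.
  by case: (i \in L); rewrite /= ?addn0 ?addn1 ?eqxx //; lia.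
have hB : [set i : 'I_s | #|side k i :&: E| == m] = ~: [set i | i \in L].
  apply/setP => i; rewrite !inE hcard.
  by case: (i \in L); rewrite /= ?addn0 ?addn1 ?eqxx //; lia.
have hcA : #|[set i | i \in L]| = t.
  rewrite -hsL -(card_uniqP hL); apply: eq_card => i; by rewrite inE.
split; first by rewrite hA.
rewrite hB; apply/eqP; rewrite -(eqn_add2l t) -{1}hcA cardsC card_ord; apply/eqP; lia.
Qed.
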